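(* Assume (H2). Then for any $q,q'\in\mathbb R^d$ with $q\ne q'$ and any $A>0$ there is $\kappa>0$ such that \[\lim_{\delta\to0}\limsup_{n\to\infty}\sup_{z\in E:|z-nq|<\delta n}\frac1n\log\int_0^{\kappa n}\mathbb P_z\bigl(Z(t)\in nB(q',\delta)\bigr)\,dt\ \le\ -A.\]
   Context: Let $E\subset\mathbb R^d$ be unbounded and $(Z(t))_{t\ge0}$ a continuous-time strong Markov process on $E$ with right-continuous paths having left limits; $\mathbb P_z,\mathbb E_z$ denote probability and expectation given $Z(0)=z$. For $B\subset\mathbb R^d$ and $n>0$, $nB=\{nx:x\in B\}$; $B(x,r)$ is the open ball of center $x$ and radius $r$. (H2): the function $\hat\varphi(a)=\sup_{z\in E}\sup_{t\in[0,1]}\mathbb E_z(e^{a\cdot(Z(t)-z)})$ is finite for every $a\in\mathbb R^d$. *)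

(* Defs.v *)
From HB Require Import structures.
From mathcomp Require Import all_boot all_order all_algebra.
From mathcomp Require Import all_classical all_reals all_analysis.
Set Implicit Arguments. Unset Strict Implicit. Unset Printing Implicit Defensive.
Import Order.TTheory GRing.Theory Num.Theory.
Import numFieldNormedType.Exports.
Local Open Scope classical_set_scope.
Local Open Scope ring_scope.

Section Defs.
Variables (R : realType) (d : nat).
Notation V := 'rV[R]_d.

Definition dotp (a x : V) : R := \sum_(i < d) a ord0 i * x ord0 i.
Definition enorm (x : V) : R := Num.sqrt (\sum_(i < d) x ord0 i ^+ 2).

Definition eball (x : V) (r : R) : set V := [set y | enorm (y - x) < r].

Definition scaleset (n : R) (B : set V) : set V := [set n *: x | x in B].

Definition rV_borel (B : set V) : Prop := <<s [set O : set V | open O] >> B.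

Definition unbounded (E : set V) : Prop :=
  ~ (exists M : R, forall z, E z -> enorm z <= M).

(* A right-continuous process with left limits, strong Markov w.r.t. a
   filtration F, with state space E, laws P z (z in E). *)
Section Process.
Variables (dO : measure_display) (Om : measurableType dO)
  (E : set V) (P : V -> probability Om R) (Z : R -> Om -> V)
  (F : R -> set (set Om)).

Definition filtration_adapted : Prop :=
  [/\ (forall t, (0 <= t)%R -> sigma_algebra setT (F t) /\ F t `<=` measurable),
      (forall s t, (0 <= s)%R -> (s <= t)%R -> F s `<=` F t) &
      (forall t B, (0 <= t)%R -> rV_borel B -> F t (Z t @^-1` B))].

Definition cadlag_paths : Prop :=
  (forall w t, (0 <= t)%R -> (Z ^~ w) x @[x --> at_right t] --> Z t w) /\
  (forall w t, (0 < t)%R -> cvg ((Z ^~ w) x @[x --> at_left t])).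

Definition stopping_time (tau : Om -> R) : Prop :=
  (forall w, (0 <= tau w)%R) /\
  (forall t, (0 <= t)%R -> F t [set w | (tau w <= t)%R]).

Definition F_tau (tau : Om -> R) (A : set Om) : Prop :=
  measurable A /\ (forall t, (0 <= t)%R -> F t (A `&` [set w | (tau w <= t)%R])).

Definition strong_Markov : Prop :=
  forall z, E z -> forall tau, stopping_time tau -> forall A, F_tau tau A ->
  forall s B, (0 <= s)%R -> rV_borel B ->
    (P z (A `&` [set w | B (Z (tau w + s)%R w)]) =
    \int[P z]_(w in A) P (Z (tau w) w) [set w' | B (Z s w')])%E.

Definition strong_Markov_process : Prop :=
  [/\ filtration_adapted, cadlag_paths,
    (forall t w, (0 <= t)%R -> E (Z t w)) /\
    (forall z, E z -> P z [set w | Z 0%R w = z] = 1%E),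
    (* measurability of z |-> P z A on E (trace sigma-algebra) *)
    (forall A : set Om, measurable A -> forall r : R,
       exists B, rV_borel B /\ E `&` [set z | (P z A <= r%:E)%E] = E `&` B) &
    strong_Markov].

End Process.

Local Open Scope ereal_scope.

Definition phi_hat (dO : measure_display) (Om : measurableType dO)
  (E : set V) (P : V -> probability Om R) (Z : R -> Om -> V) (a : V) : \bar R :=
  ereal_sup [set e | exists z t, [/\ E z, (0 <= t <= 1)%R &
     e = \int[P z]_w (expR (dotp a (Z t w - z)))%:E]].

Definition H2 (dO : measure_display) (Om : measurableType dO)
  (E : set V) (P : V -> probability Om R) (Z : R -> Om -> V) : Prop :=
  forall a, phi_hat E P Z a < +oo.

Definition occupation_rate (dO : measure_display) (Om : measurableType dO)
  (E : set V) (P : V -> probability Om R) (Z : R -> Om -> V)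
  (q q' : V) (kappa delta : R) (n : nat) : \bar R :=
  ereal_sup [set ((n%:R)^-1)%:E *
      lne (\int[lebesgue_measure]_(t in `[0%R, (kappa * n%:R)%R]%classic)
             P z [set w | scaleset n%:R (eball q' delta) (Z t w)])
    | z in [set z | E z /\ (enorm (z - n%:R *: q) < delta * n%:R)%R]].

End Defs.

(* Main.v *)
Require Import Defs.
From HB Require Import structures.
From mathcomp Require Import all_boot all_order all_algebra.
From mathcomp Require Import all_classical all_reals all_analysis.
From mathcomp Require Import measurable_realfun.
From mathcomp Require Import ring lra.
Import Order.TTheory GRing.Theory Num.Theory.
Import numFieldNormedType.Exports.
Local Open Scope classical_set_scope.
Local Open Scope ring_scope.
Section Gen.
Local Open Scope ereal_scope.
Context d (T : measurableType d) (R : realType).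

Lemma le_int_nm (mu : {measure set T -> \bar R}) (D : set T) (f g : T -> \bar R) :
  (forall x, D x -> 0 <= f x) -> (forall x, D x -> f x <= g x) ->
  \int[mu]_(x in D) f x <= \int[mu]_(x in D) g x.
Proof.
move=> f0 fg.
have g0 : forall x, D x -> 0 <= g x by move=> x Dx; exact: le_trans (f0 _ Dx) (fg _ Dx).
rewrite ge0_integralE // [leRHS]ge0_integralE //=.
apply: le_ereal_sup => _ [h hf <-]; exists h => //= x.
apply: le_trans (hf x) _; rewrite /patch; case: ifP => // /[!inE] Dx; exact: fg.
Qed.

Lemma nneseries_single (u : nat -> \bar R) n0 :
  (forall k, k != n0 -> u k = 0) -> 0 <= u n0 -> \sum_(k <oo) u k = u n0.
Proof.
move=> u0 un0.
have uge0 : forall k, true -> 0 <= u k.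
  by move=> k _; have [->|/u0->] := eqVneq k n0.
rewrite (nneseriesD1 (n:=n0) uge0) // eseries0 ?adde0 // => i _ /=; exact: u0.
Qed.
End Gen.

Definition kj (j : nat) : int := odflt 0%Z (@pickle_inv int j).

Section Disc.
Context dd (T : measurableType dd) (R : realType).
Local Open Scope ereal_scope.
Variable mu : {measure set T -> \bar R}.
Variable X : T -> R.
Hypothesis mX : forall k : int, measurable [set w | Num.floor (X w) = k].

Definition cj (j : nat) : R :=
  if @pickle_inv int j is Some k then expR (k%:~R + 1) else 0.

Definition Sj j := [set w | Num.floor (X w) = kj j].

Definition term j w := (cj j * \1_(Sj j) w)%:E.

Lemma cj_ge0 j : (0 <= cj j)%R.
Proof. by rewrite /cj; case: pickle_inv => // k; exact: expR_ge0. Qed.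

Lemma term_ge0 j w : 0 <= term j w.
Proof. by rewrite lee_fin mulr_ge0 // ?cj_ge0. Qed.

Lemma term_meas j : measurable_fun setT (term j).
Proof.
rewrite /term; apply/measurable_EFinP.
apply: measurable_funM; first exact: measurable_cst.
exact/measurable_indic/mX.
Qed.

Lemma series_eq w :
  \sum_(j <oo) term j w = (expR ((Num.floor (X w))%:~R + 1))%:E.
Proof.
rewrite (@nneseries_single _ _ (pickle (Num.floor (X w)))).
- by rewrite /term /cj /Sj /kj pickleK_inv /= indicE mem_set // mulr1.
- move=> j hj; rewrite /term /cj /Sj /kj.
  case hk: (pickle_inv j) => [k|] /=; last by rewrite mul0r.
  rewrite indicE; case: (boolP (_ \in _)) => [|_]; last by rewrite mulr0.
  rewrite inE /= => hfk; move: hj; rewrite hfk.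
  have e := @pickle_invK int j; rewrite hk /= in e; by rewrite e eqxx.
- exact: term_ge0.
Qed.

Lemma int_term j : \int[mu]_w term j w = (cj j)%:E * mu (Sj j).
Proof.
rewrite /term (@integralZl_indic _ _ _ mu setT measurableT (fun _ => Sj j) (cj j)) //.
- rewrite integral_indic //; last exact: mX.
  by congr (_ * mu _); apply/seteqP; split => x //= [].
- by move=> h; have := cj_ge0 j; rewrite leNgt h.
- exact: mX.
Qed.

Lemma disc_lo : \int[mu]_w (expR (X w))%:E <= \sum_(j <oo) (cj j)%:E * mu (Sj j).
Proof.
apply: (@le_trans _ _ (\int[mu]_w \sum_(j <oo) term j w)).
  apply: le_int_nm => w _; first by rewrite lee_fin expR_ge0.
  rewrite series_eq lee_fin ler_expR; apply/ltW.
  by rewrite -[1%R]/(1%:~R) -intrD floorD1_gt.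
rewrite integral_nneseries //; last by move=> n w _; exact: term_ge0.
  apply: lee_nneseries => j _; first by rewrite integral_ge0 // => w _; exact: term_ge0.
  by rewrite int_term.
by move=> n; exact: term_meas.
Qed.

Lemma disc_hi : \sum_(j <oo) (cj j)%:E * mu (Sj j) <= \int[mu]_w (expR (X w + 1))%:E.
Proof.
rewrite (eq_eseriesr (g := fun j => \int[mu]_w term j w)); last by move=> j _; rewrite int_term.
rewrite -integral_nneseries //; last by move=> n w _; exact: term_ge0.
  apply: le_int_nm => w _; first by apply: nneseries_ge0 => j _ _; exact: term_ge0.
  by rewrite series_eq lee_fin ler_expR lerD2r floor_le.
by move=> n; exact: term_meas.
Qed.

End Disc.
Section Vec.
Context (R : realType) (d : nat).
Notation V := 'rV[R]_d.

Lemma dotpD (a u v : V) : dotp a (u + v) = dotp a u + dotp a v.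
Proof. by rewrite /dotp -big_split /=; apply: eq_bigr => i _; rewrite mxE mulrDr. Qed.
Lemma dotpN (a u : V) : dotp a (- u) = - dotp a u.
Proof. by rewrite /dotp -sumrN; apply: eq_bigr => i _; rewrite mxE mulrN. Qed.
Lemma dotpB (a u v : V) : dotp a (u - v) = dotp a u - dotp a v.
Proof. by rewrite dotpD dotpN. Qed.
Lemma dotpZ (a u : V) k : dotp a (k *: u) = k * dotp a u.
Proof. by rewrite /dotp mulr_sumr; apply: eq_bigr => i _; rewrite mxE mulrCA. Qed.

Lemma coord_le_enorm (v : V) i : `|v ord0 i| <= enorm v.
Proof.
rewrite /enorm -sqrtr_sqr; apply: ler_wsqrtr.
rewrite (bigD1 i) //= lerDl; apply: sumr_ge0 => j _; exact: sqr_ge0.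
Qed.

Lemma dotp_le (a v : V) : `|dotp a v| <= (\sum_(i < d) `|a ord0 i|) * enorm v.
Proof.
rewrite /dotp mulr_suml; apply: le_trans (ler_norm_sum _ _ _) _.
apply: ler_sum => i _; rewrite normrM; apply: ler_wpM2l => //; exact: coord_le_enorm.
Qed.

Lemma cont_comp_coord (g : R -> R) i : continuous g -> continuous (fun x : V => g (x ord0 i)).
Proof.
move=> cg x; apply: (@continuous_comp _ _ _ (fun x : V => x ord0 i) g).
  exact: coord_continuous.
exact: cg.
Qed.

Lemma continuous_dotp (a z : V) : continuous (fun x : V => dotp a (x - z)).
Proof.
rewrite /dotp; apply: continuous_big; first exact: add_continuous.
move=> i Hi.
have -> : (fun x0 : V => a ord0 i * (x0 - z) ord0 i) =
   (fun x0 => (fun y => a ord0 i * (y - z ord0 i)) (x0 ord0 i)).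
  by apply: funext => x0; rewrite !mxE.
apply: (@cont_comp_coord (fun y => a ord0 i * (y - z ord0 i)) i) => y.
apply: cvgM; first exact: cvg_cst.
apply: cvgB; [exact: cvg_id | exact: cvg_cst].
Qed.

Lemma continuous_enorm_aff (c : R) (p : V) : continuous (fun x : V => enorm (c *: x - p)).
Proof.
move=> x; rewrite /enorm.
apply: (@continuous_comp _ _ _ (fun x : V => \sum_(i < d) (c *: x - p) ord0 i ^+ 2) (@Num.sqrt R)).
  have -> : (fun x0 : V => \sum_(i < d) (c *: x0 - p) ord0 i ^+ 2) =
     (fun x0 => \sum_(i < d) (fun y => (c * y - p ord0 i) * (c * y - p ord0 i)) (x0 ord0 i)).
    by apply: funext => x0; apply: eq_bigr => i _; rewrite !mxE expr2.
  apply: continuous_big; first exact: add_continuous.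
  move=> i Hi; apply: (@cont_comp_coord (fun y => (c * y - p ord0 i) * (c * y - p ord0 i)) i) => y.
  have h : (fun y => c * y - p ord0 i) @ y --> c * y - p ord0 i.
    apply: cvgB; last exact: cvg_cst.
    apply: cvgM; [exact: cvg_cst | exact: cvg_id].
  exact: cvgM.
exact: sqrt_continuous.
Qed.

Lemma open_ltf (f : V -> R) c : continuous f -> open [set x | f x < c].
Proof.
move=> cf; apply: (@open_comp _ _ f [set y | y < c]); last exact: open_lt.
by move=> x _; exact: cf.
Qed.

Lemma open_gtf (f : V -> R) c : continuous f -> open [set x | c < f x].
Proof.
move=> cf; apply: (@open_comp _ _ f [set y | c < y]); last exact: open_gt.
by move=> x _; exact: cf.
Qed.

Lemma open_borel (B : set V) : open B -> rV_borel B.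
Proof. by move=> oB; apply: sub_sigma_algebra. Qed.

Lemma rV_borelC (A : set V) : rV_borel A -> rV_borel (~` A).
Proof. by move=> hA; rewrite -setTD; apply: sigma_algebraCD. Qed.

Lemma rV_borelU (A B : set V) : rV_borel A -> rV_borel B -> rV_borel (A `|` B).
Proof.
move=> hA hB; rewrite -bigcup2E; apply: sigma_algebra_bigcup => -[|[|i]] //=.
exact: sigma_algebra0.
Qed.

Lemma rV_borelI (A B : set V) : rV_borel A -> rV_borel B -> rV_borel (A `&` B).
Proof.
move=> hA hB; rewrite -[A `&` B]setCK setCI.
by apply: rV_borelC; apply: rV_borelU; apply: rV_borelC.
Qed.

Lemma scaleset_eq (n : R) (q : V) (dl : R) : n != 0 ->
  scaleset n (eball q dl) = [set x | enorm (n^-1 *: x - q) < dl].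
Proof.
move=> n0; apply/seteqP; split => [_ [y yB <-]|x xB] /=.
  by rewrite scalerA mulVf // scale1r.
by exists (n^-1 *: x) => //; rewrite scalerA divff // scale1r.
Qed.

Lemma scaleset_borel (n : R) (q : V) (dl : R) : n != 0 ->
  rV_borel (scaleset n (eball q dl)).
Proof.
move=> n0; rewrite scaleset_eq //; apply: open_borel; apply: open_ltf.
exact: continuous_enorm_aff.
Qed.

Lemma floor_set_borel (a z : V) (k : int) :
  rV_borel [set x | Num.floor (dotp a (x - z)) = k].
Proof.
have -> : [set x : V | Num.floor (dotp a (x - z)) = k] =
   ~` [set x | dotp a (x - z) < k%:~R] `&` [set x | dotp a (x - z) < (k + 1)%:~R].
  apply/seteqP; split => x /=.
    by move=> <-; split; [apply/negP; rewrite -leNgt floor_le | exact: floorD1_gt].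
  by move=> [/negP]; rewrite -leNgt => h1 h2; apply: floor_def; rewrite h1 h2.
apply: rV_borelI; first apply: rV_borelC; apply: open_borel; apply: open_ltf;
  exact: continuous_dotp.
Qed.
Lemma geo (a q q' y z : V) (n dl : R) : 0 <= n -> enorm (y - q') < dl ->
  enorm (z - n *: q) < dl * n ->
  n * (dotp a (q' - q) - 2 * (\sum_(i < d) `|a ord0 i|) * dl) <= dotp a (n *: y - z).
Proof.
move=> n0 hy hz.
set Sa := \sum_(i < d) `|a ord0 i|.
have Sa0 : 0 <= Sa by apply: sumr_ge0 => i _.
have h1 := dotp_le a (y - q'); have h2 := dotp_le a (z - n *: q).
rewrite -/Sa in h1 h2.
have A1 : dotp a q' - dotp a y <= Sa * dl.
  apply: le_trans (_ : `|dotp a (y - q')| <= _) => //; last first.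
    by apply: le_trans h1 _; rewrite ler_wpM2l // ltW.
  by rewrite dotpB -normrN opprB ler_norm.
have A2 : dotp a z - n * dotp a q <= Sa * (dl * n).
  apply: le_trans (_ : `|dotp a (z - n *: q)| <= _) => //; last first.
    by apply: le_trans h2 _; rewrite ler_wpM2l // ltW.
  by rewrite dotpB dotpZ ler_norm.
have A1' := ler_wpM2l n0 A1.
rewrite !dotpB dotpZ.
nra.
Qed.

End Vec.

Section Proc.
Context (R : realType) (d : nat) (dO : measure_display) (Om : measurableType dO)
  (E : set 'rV[R]_d) (P : 'rV[R]_d -> probability Om R)
  (Z : R -> Om -> 'rV[R]_d) (F : R -> set (set Om)).
Notation V := 'rV[R]_d.
Hypothesis SM : strong_Markov_process E P Z F.

Lemma Zmeas t B : 0 <= t -> rV_borel B -> measurable (Z t @^-1` B).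
Proof.
have := SM; rewrite /strong_Markov_process /filtration_adapted => -[[H1 _ H3] _ _ _ _] t0 hB.
exact: (proj2 (H1 t t0) _ (H3 t B t0 hB)).
Qed.

Lemma ZE t w : 0 <= t -> E (Z t w).
Proof. by have := SM; rewrite /strong_Markov_process /filtration_adapted => -[_ _ [hE _] _ _] t0; exact: hE. Qed.

Lemma Fcst u (Pr : Prop) : 0 <= u -> F u [set _ : Om | Pr].
Proof.
have := SM; rewrite /strong_Markov_process /filtration_adapted => -[[H1 _ _] _ _ _ _] u0.
move: (H1 u u0) => -[]; rewrite /sigma_algebra => -[F0 FC _] _.
have [hP|hP] := pselect Pr.
  have -> : [set _ : Om | Pr] = setT by apply/seteqP; split.
  by rewrite -(setD0 setT); apply: FC.
by have -> : [set _ : Om | Pr] = set0 by apply/seteqP; split => // x.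
Qed.

Lemma Markov z t s (B : set V) : E z -> 0 <= t -> 0 <= s -> rV_borel B ->
  P z (Z (t + s) @^-1` B) = (\int[P z]_w P (Z t w) (Z s @^-1` B))%E.
Proof.
move=> Ez t0 s0 hB.
have := SM; rewrite /strong_Markov_process /filtration_adapted => -[_ _ _ _ hSM].
have st : stopping_time F (fun _ : Om => t).
  by split => // u u0; apply: Fcst.
have Ft : F_tau F (fun _ : Om => t) setT.
  by split => // u u0; rewrite setTI; apply: Fcst.
have := hSM z Ez _ st setT Ft s B s0 hB.
by rewrite setTI.
Qed.

Lemma Pmeas t (S : set Om) : 0 <= t -> measurable S ->
  measurable_fun [set: Om] (fun w => (P (Z t w) S : \bar R)).
Proof.
move=> t0 mS.
apply: (measurability _ (ErealGenOInfty.measurableE R)) => // _ [_ [x ->] <-].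
have := SM; rewrite /strong_Markov_process /filtration_adapted => -[_ _ _ hm _].
have [B [hB hEB]] := hm S mS x.
rewrite setTI (_ : _ @^-1` _ = ~` (Z t @^-1` B)).
  by apply: measurableC; exact: Zmeas.
apply/seteqP; split => w /=.
  rewrite in_itv /= andbT => xP hBw.
  have : (E `&` B) (Z t w) by split => //; exact: ZE.
  by rewrite -hEB => -[_ /=]; rewrite leNgt xP.
move=> nB; rewrite in_itv /= andbT ltNge; apply/negP => hle; apply: nB.
have : (E `&` [set z | (P z S <= x%:E)%E]) (Z t w) by split => //; exact: ZE.
by rewrite hEB => -[].
Qed.

Lemma dotpZ_meas t (a v : V) : 0 <= t -> measurable_fun setT (fun w => dotp a (Z t w - v)).
Proof.
move=> t0.
apply: (measurability _ (RGenOInfty.measurableE R)) => // _ [_ [x ->] <-].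
rewrite setTI (_ : _ @^-1` _ = Z t @^-1` [set y | x < dotp a (y - v)]).
  apply: Zmeas => //; apply: open_borel; apply: open_gtf; exact: continuous_dotp.
by apply/seteqP; split => w /=; rewrite in_itv /= andbT.
Qed.

Lemma expZ_meas t (a v : V) : 0 <= t ->
  measurable_fun setT (fun w => (expR (dotp a (Z t w - v)))%:E).
Proof.
move=> t0; apply/measurable_EFinP.
apply: measurableT_comp => //; exact: dotpZ_meas.
Qed.

Lemma floorZ_meas t (a v : V) (k : int) : 0 <= t ->
  measurable [set w | Num.floor (dotp a (Z t w - v)) = k].
Proof.
move=> t0; exact: (Zmeas t _ t0 (@floor_set_borel _ _ a v k)).
Qed.

Section Step.
Variables (a : V) (Phi : R).
Hypothesis hPhi : forall y s, E y -> 0 <= s <= 1 ->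
  (\int[P y]_w (expR (dotp a (Z s w - y)))%:E <= Phi%:E)%E.
Hypothesis Phi0 : 0 <= Phi.

Lemma step z t s : E z -> 0 <= t -> 0 <= s <= 1 ->
  (\int[P z]_w (expR (dotp a (Z (t + s) w - z)))%:E <=
   (expR 1 * Phi)%:E * \int[P z]_w (expR (dotp a (Z t w - z)))%:E)%E.
Proof.
move=> Ez t0 /andP[s0 s1].
have ts0 : 0 <= t + s by rewrite addr_ge0.
pose X' := fun w => dotp a (Z (t + s) w - z).
have mX' : forall k : int, measurable [set w | Num.floor (X' w) = k].
  by move=> k; exact: floorZ_meas.
apply: le_trans (@disc_lo _ _ _ (P z) X' mX') _.
pose Bj j := [set x : V | Num.floor (dotp a (x - z)) = kj j].
have mB : forall j, measurable (Z s @^-1` Bj j).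
  by move=> j; exact: (Zmeas s _ s0 (@floor_set_borel _ _ a z (kj j))).
have eS : forall j, P z (@Sj _ _ _ X' j) = (\int[P z]_w P (Z t w) (Z s @^-1` Bj j))%E.
  by move=> j; rewrite -Markov //; exact: floor_set_borel.
rewrite (eq_eseriesr (g := fun j => \int[P z]_w ((cj R j)%:E * P (Z t w) (Z s @^-1` Bj j)))%E); last first.
  move=> j _; transitivity ((cj R j)%:E * \int[P z]_w P (Z t w) (Z s @^-1` Bj j))%E; first by rewrite -eS.
  by rewrite ge0_integralZl_EFin //; [exact: Pmeas | exact: cj_ge0].
rewrite -integral_nneseries //; try by [
  move=> j w _; rewrite mule_ge0 // ?lee_fin ?cj_ge0 //
| move=> j; apply: measurable_funeM; exact: Pmeas].
rewrite -ge0_integralZl_EFin //; try by [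
  rewrite mulr_ge0 // expR_ge0
| exact: expZ_meas
| move=> w _; rewrite lee_fin expR_ge0].
apply: le_int_nm => w _.
  by apply: nneseries_ge0 => j _ _; rewrite mule_ge0 // ?lee_fin ?cj_ge0 //.
set y := Z t w; have Ey : E y by exact: ZE.
pose Xy := fun w' => dotp a (Z s w' - z).
have mXy : forall k : int, measurable [set w | Num.floor (Xy w) = k].
  by move=> k; exact: floorZ_meas.
apply: le_trans (@disc_hi _ _ _ (P y) Xy mXy) _.
have eI : forall w', (expR (Xy w' + 1))%:E =
    ((expR (dotp a (y - z) + 1))%:E * (expR (dotp a (Z s w' - y)))%:E)%E.
  move=> w'; rewrite /Xy -EFinM -expRD; congr (expR _)%:E.
  have -> : Z s w' - z = (Z s w' - y) + (y - z) by rewrite addrA subrK.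
  by rewrite dotpD -addrA addrC.
under eq_integral => w' _ do rewrite eI.
rewrite ge0_integralZl_EFin //; try by [exact: expZ_meas].
apply: le_trans (lee_wpmul2l _ (hPhi _ s Ey _)) _.
- by rewrite lee_fin expR_ge0.
- by rewrite s0 s1.
by rewrite -!EFinM lee_fin expRD [X in _ <= X]mulrC mulrA.
Qed.
Definition Mc := Num.max 1 (expR 1 * Phi).

Lemma e_ge1 : 1 <= expR 1 :> R.
Proof. by have := expR_ge1Dx (1 : R); apply: le_trans; rewrite lerDl. Qed.

Lemma Mc_ge1 : 1 <= Mc.
Proof. by rewrite /Mc le_max lexx. Qed.

Lemma ePhi_le : expR 1 * Phi <= Mc.
Proof. by rewrite /Mc le_max lexx orbT. Qed.

Lemma Phi_le : Phi <= Mc.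
Proof.
apply: le_trans ePhi_le; rewrite ler_peMl //; exact: e_ge1.
Qed.

Lemma iterb m : forall z t, E z -> 0 <= t <= m.+1%:R ->
  (\int[P z]_w (expR (dotp a (Z t w - z)))%:E <= (Mc ^+ m.+1)%:E)%E.
Proof.
elim: m => [|m IH] z t Ez /andP[t0 tm].
  by apply: le_trans (hPhi _ _ Ez _) _; [rewrite t0 | rewrite lee_fin expr1 Phi_le].
have [t1|t1] := leP t 1.
  apply: le_trans (hPhi _ _ Ez _) _; first by rewrite t0.
  rewrite lee_fin; apply: le_trans Phi_le _.
  rewrite exprS ler_peMr //; first exact: le_trans Mc_ge1.
  exact: exprn_ege1 Mc_ge1.
rewrite -{1}(subrK 1 t).
have t10 : 0 <= t - 1 by rewrite subr_ge0 ltW.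
apply: le_trans (step _ _ _ Ez t10 _) _; first by rewrite ler01 lexx.
apply: le_trans (lee_wpmul2l _ (IH _ _ Ez _)) _.
- by rewrite lee_fin mulr_ge0 // expR_ge0.
- rewrite t10 /= lerBlDr; apply: le_trans tm _.
  by rewrite -natr1.
rewrite -EFinM lee_fin [X in _ <= X]exprS ler_wpM2r //; last exact: ePhi_le.
by apply: exprn_ge0; apply: le_trans Mc_ge1.
Qed.

Lemma cheb z t (S : set Om) c m : E z -> 0 <= t <= m.+1%:R -> measurable S ->
  (forall w, S w -> c <= dotp a (Z t w - z)) ->
  (P z S <= (expR (- c) * Mc ^+ m.+1)%:E)%E.
Proof.
move=> Ez tm mS hS.
have h1 : ((expR c)%:E * P z S = \int[P z]_w (expR c * \1_S w)%:E)%E.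
  rewrite (@integralZl_indic _ _ _ (P z) setT measurableT (fun _ => S) (expR c)) //; last first.
    by move=> h; have := expR_gt0 c; rewrite ltNge ltW.
  rewrite integral_indic //; congr (_ * _)%E.
  by apply/esym; congr (P z _); apply/seteqP; split => w //= [].
have h2 : (\int[P z]_w (expR c * \1_S w)%:E <=
           \int[P z]_w (expR (dotp a (Z t w - z)))%:E)%E.
  apply: le_int_nm => w _; first by rewrite lee_fin mulr_ge0 // expR_ge0.
  rewrite lee_fin indicE; case: (boolP (w \in S)) => [/set_mem/hS hc|_].
    by rewrite mulr1 ler_expR.
  by rewrite mulr0 expR_ge0.
have h3 := iterb m z t Ez tm.
have fS : P z S \is a fin_num.
  by rewrite ge0_fin_numE ?measure_ge0 // (le_lt_trans (probability_le1 _ mS)) // ltry.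
rewrite -(fineK fS); move: h1; rewrite -(fineK fS) -EFinM => h1.
have hx : ((expR c * fine (P z S))%:E <= (Mc ^+ m.+1)%:E)%E.
  by rewrite h1; exact: le_trans h2 h3.
set x := fine (P z S) in hx *.
rewrite lee_fin.
have -> : x = expR (- c) * (expR c * x) by rewrite mulrA -expRD addNr expR0 mul1r.
by rewrite ler_wpM2l // expR_ge0.
Qed.

Lemma occ_bound (q q' : V) kap dl (n : nat) z : E z -> (0 < n)%N -> 0 <= kap -> 0 < dl ->
  enorm (z - n%:R *: q) < dl * n%:R ->
  (\int[lebesgue_measure]_(t in `[0%R, (kap * n%:R)%R]%classic)
      P z [set w | scaleset n%:R (eball q' dl) (Z t w)]
    <= ((kap * n%:R) * expR (- (n%:R * (dotp a (q' - q) - 2 * (\sum_(i < d) `|a ord0 i|) * dl))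
           + (kap * n%:R + 1) * ln Mc))%:E)%E.
Proof.
move=> Ez n0 kap0 dl0 hz.
set c := n%:R * (dotp a (q' - q) - 2 * (\sum_(i < d) `|a ord0 i|) * dl).
set K := expR (- c + (kap * n%:R + 1) * ln Mc).
have nz : (n%:R : R) != 0 by rewrite pnatr_eq0 -lt0n.
have Mc0 : 0 < Mc by apply: lt_le_trans Mc_ge1.
apply: le_trans; first apply: (@le_int_nm _ _ _ _ _ _ (cst K%:E)) => t ht.
  exact: measure_ge0.
  move: ht; rewrite /= in_itv /= => /andP[t0 tk].
  set m := Num.trunc t.
  have tm : 0 <= t <= m.+1%:R by rewrite t0 ltW // truncnS_gt.
  have mS : measurable [set w | scaleset n%:R (eball q' dl) (Z t w)].
    exact: (Zmeas t _ t0 (@scaleset_borel _ _ n%:R q' dl nz)).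
  have hS : forall w, [set w | scaleset n%:R (eball q' dl) (Z t w)] w ->
      c <= dotp a (Z t w - z).
    move=> w /= [y hy <-]; apply: geo => //.
  apply: le_trans (cheb z t _ c m Ez tm mS hS) _.
  rewrite lee_fin /K expRD ler_wpM2l ?expR_ge0 //.
  rewrite -[X in X ^+ _](lnK Mc0) -expRM_natl ler_expR ler_wpM2r //.
    by rewrite ln_ge0 // Mc_ge1.
  rewrite -natr1 lerD2r; apply: le_trans tk.
  by rewrite truncn_le.
rewrite integral_cst /=; last exact: measurable_itv.
rewrite lebesgue_measure_itv /= lte_fin.
case: ifPn => _; last by rewrite mule0 lee_fin mulr_ge0 // ?expR_ge0 // mulr_ge0.
by rewrite oppr0 adde0 -EFinM lee_fin mulrC.
Qed.

End Step.

End Proc.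

Lemma final_arith (R : realType) (A ell Sa n : R) : 0 <= ell -> 0 <= Sa -> ell < n ->
  (n^-1 * (ln ((ell + 1)^-1 * n) + (- (n * ((A + 4) - 2 * Sa * (2 * Sa + 1)^-1))
     + ((ell + 1)^-1 * n + 1) * ell)) <= - A)%R.
Proof.
move=> ell0 Sa0 elln.
have n0 : (0 < n)%R by apply: le_lt_trans elln.
set kap := (ell + 1)^-1.
have kap0 : (0 < kap)%R by rewrite invr_gt0; lra.
have kap1 : (kap <= 1)%R by rewrite invf_le1; lra.
have kell : (kap * ell <= 1)%R.
  by rewrite /kap mulrC -[X in (_ <= X)%R](@divff _ (ell + 1)) ?ler_wpM2r ?invr_ge0 //; lra.
have sd : (2 * Sa * (2 * Sa + 1)^-1 <= 1)%R.
  by rewrite -[X in (_ <= X)%R](@divff _ (2 * Sa + 1)) ?ler_wpM2r ?invr_ge0 //; lra.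
have h1 : (ln (kap * n) <= n)%R.
  apply: le_trans (ltW (ln_sublinear _)) _; first by rewrite mulr_gt0.
  by rewrite -[X in (_ <= X)%R]mul1r ler_wpM2r // ltW.
have h2 := ler_wpM2l (ltW n0) sd.
have h3 := ler_wpM2l (ltW n0) kell.
rewrite ler_pdivrMl //.
nra.
Qed.


Section Final.
Local Open Scope ereal_scope.

Lemma lne_bound (R : realType) (x : \bar R) (y n : R) : 0 <= x -> x <= y%:E ->
  (0 < y)%R -> (0 <= n)%R -> (n^-1)%:E * lne x <= (n^-1 * ln y)%:E.
Proof.
move=> x0 xy y0 n0.
rewrite EFinM -lne_EFin //; apply: lee_wpmul2l; first by rewrite lee_fin invr_ge0.
by rewrite lee_lne // in_itv /= ?leey ?andbT // lee_fin ltW.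
Qed.

Lemma limn_esup_le (R : realType) (u v : (\bar R)^nat) :
  (forall n, u n <= v n) -> limn_esup u <= limn_esup v.
Proof.
move=> uv; rewrite !limn_esup_lim; apply: lee_lim; try exact: is_cvg_esups.
apply: nearW => n /=; apply: ge_ereal_sup => _ [k kn <-].
by apply: le_trans (uv k) _; apply: ereal_sup_ubound; exists k.
Qed.

Lemma limn_esup_bnd (R : realType) (u : (\bar R)^nat) (c : \bar R) N :
  (forall n, (N <= n)%N -> u n <= c) -> limn_esup u <= c.
Proof.
move=> hu; rewrite limn_esup_lim (cvg_lim _ (@cvg_esups_inf _ u)) //.
apply: le_trans (ereal_inf_lbound _) _; first by exists N.
by apply: ge_ereal_sup => _ [k kN <-]; exact: hu.
Qed.

End Final.

Theorem lemma3p1 (R : realType) (d : nat) (dO : measure_display)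
  (Om : measurableType dO) (E : set 'rV[R]_d) (P : 'rV[R]_d -> probability Om R)
  (Z : R -> Om -> 'rV[R]_d) (F : R -> set (set Om)) :
  unbounded E ->
  strong_Markov_process E P Z F ->
  H2 E P Z ->
  forall (q q' : 'rV[R]_d) (A : R), q != q' -> 0 < A ->
  exists kappa : R, 0 < kappa /\
    exists l : \bar R,
      limn_esup (occupation_rate E P Z q q' kappa delta) @[delta --> 0^'+] --> l
      /\ (l <= (- A)%:E)%E.
Proof.
move=> unbE SM hH2 q q' A qq' A0.
have [z0 Ez0] : exists z0, E z0.
  apply: contrapT => h; apply: unbE; exists 0 => z Ez.
  by case: h; exists z.
set Dv := q' - q.
have [i0 hi0] : exists i, Dv ord0 i != 0.
  apply: contrapT => h; apply: (negP qq'); apply/eqP/matrixP => i j; rewrite (fintype.ord1 i).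
  have : Dv ord0 j = 0 by apply: contrapT => hj; apply: h; exists j; apply/eqP.
  by rewrite /Dv !mxE => /eqP; rewrite subr_eq0 => /eqP.
set L2 := \sum_(i < d) Dv ord0 i ^+ 2.
have L2pos : 0 < L2.
  rewrite /L2 (bigD1 i0) //=.
  have h1 : 0 < Dv ord0 i0 ^+ 2 by rewrite lt_def sqr_ge0 andbT expf_neq0.
  have h2 : 0 <= \sum_(i < d | i != i0) Dv ord0 i ^+ 2 by apply: sumr_ge0 => i _; exact: sqr_ge0.
  lra.
set mu := (A + 4) / L2.
set a := mu *: Dv.
have haD : dotp a (q' - q) = A + 4.
  have -> : dotp a (q' - q) = mu * L2.
    by rewrite /dotp /L2 mulr_sumr; apply: eq_bigr => i _; rewrite mxE expr2 mulrA.
  by rewrite /mu divfK // gt_eqF.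
set ph := phi_hat E P Z a.
have ph_ge0 : (0 <= ph)%E.
  apply: le_trans (_ : (0 <= \int[P z0]_w (expR (dotp a (Z 0 w - z0)))%:E)%E) _.
    by apply: integral_ge0 => w _; rewrite lee_fin expR_ge0.
  apply: ereal_sup_ubound; exists z0, 0; split => //; by rewrite lexx ler01.
have ph_fin : ph \is a fin_num by rewrite ge0_fin_numE //; exact: hH2.
set Phi := fine ph.
have Phi0 : 0 <= Phi by rewrite fine_ge0.
have hPhi : forall y s, E y -> 0 <= s <= 1 ->
    (\int[P y]_w (expR (dotp a (Z s w - y)))%:E <= Phi%:E)%E.
  move=> y s Ey hs; rewrite /Phi fineK //.
  by apply: ereal_sup_ubound; exists y, s; split.
set M := Mc R Phi.
set ell := ln M.
have M1 : 1 <= M by exact: (@Mc_ge1 R).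
have ell0 : 0 <= ell by rewrite /ell ln_ge0.
set kap := (ell + 1)^-1.
have kap0 : 0 < kap by rewrite invr_gt0; lra.
set Sa := \sum_(i < d) `|a ord0 i|.
have Sa0 : 0 <= Sa by apply: sumr_ge0 => i _.
set d0 := (2 * Sa + 1)^-1.
have d00 : 0 < d0 by rewrite invr_gt0; lra.
set N := (Num.trunc ell).+1.
exists kap; split => //.
set g := fun delta => limn_esup (occupation_rate E P Z q q' kap delta).
have gmono : {in Interval (BRight 0) (BInfty R false) &, nondecreasing_fun g}.
  move=> x y; rewrite !in_itv /= !andbT => x0 y0 xy.
  apply: limn_esup_le => n.
  rewrite /occupation_rate; apply: ge_ereal_sup => _ [z [Ez hz] <-].
  have n0 : (0 < n)%N.
    rewrite lt0n; apply/negP => /eqP n0; move: hz; rewrite n0 mulr0 ltNge.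
    by rewrite /enorm sqrtr_ge0.
  have nz : (n%:R : R) != 0 by rewrite pnatr_eq0 -lt0n.
  apply: le_ereal_sup_tmp; eexists.
    exists z; last reflexivity.
    split => //; apply: lt_le_trans hz _; rewrite ler_wpM2r //.
  apply: lee_wpmul2l; first by rewrite lee_fin invr_ge0.
  rewrite lee_lne ?in_itv /= ?leey ?andbT; first last.
  - by apply: integral_ge0 => t _; exact: measure_ge0.
  - by apply: integral_ge0 => t _; exact: measure_ge0.
  apply: le_int_nm => t ht; first exact: measure_ge0.
  move: ht; rewrite /= in_itv /= => /andP[t0 _].
  apply: le_measure; rewrite ?inE.
  - exact: (@Zmeas _ _ _ _ _ _ _ _ SM t _ t0 (@scaleset_borel _ _ n%:R q' x nz)).
  - exact: (@Zmeas _ _ _ _ _ _ _ _ SM t _ t0 (@scaleset_borel _ _ n%:R q' y nz)).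
  move=> w /= [v hv <-]; exists v => //; rewrite /eball /= in hv *.
  exact: lt_le_trans hv xy.
have gd0 : (g d0 <= (- A)%:E)%E.
  apply: (@limn_esup_bnd _ _ _ N) => n Nn.
  have n0 : (0 < n)%N by apply: leq_trans Nn.
  have elln : ell < n%:R.
    by apply: lt_le_trans (truncnS_gt ell) _; rewrite ler_nat.
  rewrite /occupation_rate; apply: ge_ereal_sup => _ [z [Ez hz] <-].
  have hI := @occ_bound _ _ _ _ _ _ _ _ SM a Phi hPhi Phi0 q q' kap d0 n z Ez n0 (ltW kap0) d00 hz.
  apply: le_trans (@lne_bound _ _ _ n%:R _ hI _ _) _; try by [
    apply: integral_ge0 => t _; exact: measure_ge0
  | rewrite mulr_gt0 ?expR_gt0 // mulr_gt0 // ltr0n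
  | rewrite ler0n ].
  rewrite lee_fin lnM ?posrE ?expR_gt0 ?mulr_gt0 ?ltr0n // expRK haD.
  exact: final_arith.
exists (ereal_inf [set g x | x in [set` Interval (BRight 0) (BInfty R false)]]).
split.
  exact: nondecreasing_at_right_cvge.
apply: le_trans (ereal_inf_lbound _) gd0; exists d0 => //.
by rewrite /= in_itv /= andbT.
Qed.
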